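(* Let $d\ge 3$, let $\mathcal M$ be a model of $\mathrm{PQM}_d$ with domain $\mathbb M$, and let $\kappa:\mathbb M\to\mathbb H_d$ be the function such that for all $m\in\mathbb M$, $p\in\mathbb H_d$: $[m:p]^{\mathcal M}\iff\kappa(m)\le p$. Then $\kappa$ is a strong $\mathcal L_d$-morphism from $\mathcal M$ to $\mathcal H_d$; that is, for all $m\in\mathbb M$: (1) for all $p\in\mathbb H_d$, $[m:p]^{\mathcal M}\iff[\kappa(m):p]^{\mathcal H_d}$; (2) for all $q\in\mathbb H_d$, $\kappa(\pi_q^{\mathcal M}(m))=\kappa(m)\,\&\,q$; (3) for all $U\in\mathbb U_d$, $\kappa(u_U^{\mathcal M}(m))=U(\kappa(m))$.
   Context: Notation. For $d\ge 1$, $\mathbb H_d$ is the set of complex linear subspaces of $\mathbb C^d$, ordered by inclusion $\le$, with $\top=\mathbb C^d$, $\bot=\{0\}$, $p^\bot$ the orthogonal complement, $p\wedge q=p\cap q$ and $p\vee q=p+q$. $\mathbb U_d$ is the set of unitary operators on $\mathbb C^d$, and for $U\in\mathbb U_d$, $p\in\mathbb H_d$, $U(p)=\{Uv: v\in p\}$. The Sasaki projection is $p\,\&\,q := q\cap(q^\bot+p)$. Subspaces $p,q$ are compatible iff $p=(p\wedge q)\vee(p\wedge q^\bot)$. Language $\mathcal L_d$: a first-order language without equality and without constants, having a unary function symbol $u_U$ for each $U\in\mathbb U_d$, a unary function symbol $\pi_q$ for each $q\in\mathbb H_d$, and a unary relation symbol $[\,\cdot:p]$ for each $p\in\mathbb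 H_d$. Theory $\mathrm{PQM}_d$ (over $\mathcal L_d$) has the following axioms, for all $p,q\in\mathbb H_d$ and $U\in\mathbb U_d$: ($\neg\bot$) $\exists x\,\neg[x:\bot]$; ($\top$) $\forall x\,[x:\top]$; ($\le$) if $p\le q$: $\forall x\,([x:p]\to[x:q])$; ($\wedge$) if $p,q$ are compatible: $\forall x\,([x:p]\wedge[x:q]\to[x:p\wedge q])$; ($\pi_i$) $\forall x\,([x:p]\to[\pi_q(x):p\,\&\,q])$; ($\pi_c$) if $p\le q$: $\forall x\,([\pi_p(\pi_q(x)):\bot]\to[\pi_p(x):\bot])$; ($\pi_\bot$) $\forall x\,([\pi_q(x):\bot]\to[x:q^\bot])$; ($u_i$) $\forall x\,([x:p]\to[u_U(x):U(p)])$; ($u_e$) $\forall x\,([u_U(x):p]\to[x:U^{-1}(p)])$. Hilbert model $\mathcal H_d$: the $\mathcal L_d$-structure with domain $\mathbb H_d$, $u_U^{\mathcal H_d}(x)=U(x)$, $\pi_q^{\mathcal H_d}(x)=x\,\&\,q$, and $[x:p]^{\mathcal H_d}$ holds iff $x\le p$. *)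

(* Defs.v *)
(* C^d is modelled as row vectors 'rV[C]_d with
   C := Stdlib's reals R (a real closed field via Rstruct) adjoined i,
   i.e. the field of complex numbers R[i] (real_closed/complex.v). *)
From HB Require Import structures.
From mathcomp Require Import all_boot all_order all_algebra.
From mathcomp Require Import complex.
From mathcomp Require Import Rstruct.
From Stdlib Require Import Reals.

Set Implicit Arguments.
Unset Strict Implicit.
Unset Printing Implicit Defensive.

Import Order.TTheory GRing.Theory Num.Theory.
Local Open Scope ring_scope.

Definition CC : numClosedFieldType := (Rdefinitions.R)[i].

(* A subspace is represented by the
   canonical square matrix <<A>> whose row space is that subspace, so that
   Leibniz equality in [Hd d] is equality of subspaces. *)
Definition Hd (d : nat) := {A : 'M[CC]_d | <<A>>%MS == A}.

Lemma genmx_canon (d : nat) (A : 'M[CC]_d) : <<(<<A>>%MS)>>%MS == <<A>>%MS.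
Proof. by rewrite genmx_id. Qed.

Definition spanH (d : nat) (A : 'M[CC]_d) : Hd d :=
  exist _ <<A>>%MS (genmx_canon A).

Definition H_le (d : nat) (p q : Hd d) : Prop := (val p <= val q)%MS.
Definition H_top (d : nat) : Hd d := spanH (1%:M : 'M[CC]_d).
Definition H_bot (d : nat) : Hd d := spanH (0 : 'M[CC]_d).
Definition H_meet (d : nat) (p q : Hd d) : Hd d := spanH (val p :&: val q)%MS.
Definition H_join (d : nat) (p q : Hd d) : Hd d := spanH (val p + val q)%MS.

(* Orthogonal complement w.r.t. the standard Hermitian inner product
   <u,v> = sum_i u_i conj(v_i)  (sesquilinear.v's orthomx with form 1). *)
Definition H_perp (d : nat) (p : Hd d) : Hd d :=
  spanH (orthomx Num.conj (1%:M : 'M[CC]_d) (val p)).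

Definition sasaki (d : nat) (p q : Hd d) : Hd d :=
  H_meet q (H_join (H_perp q) p).

Definition compatible (d : nat) (p q : Hd d) : Prop :=
  p = H_join (H_meet p q) (H_meet p (H_perp q)).

(* U_d : unitary operators on C^d, given by their matrix (acting on column
   vectors: v |-> U v). *)
Definition Ud (d : nat) := {U : 'M[CC]_d | U \is unitarymx}.

(* U(p) = { U v : v in p }; for row vectors v this is v *m U^T. *)
Definition H_act (d : nat) (U : 'M[CC]_d) (p : Hd d) : Hd d :=
  spanH (val p *m U^T).
Definition u_app (d : nat) (U : Ud d) (p : Hd d) : Hd d := H_act (val U) p.
Definition u_inv_app (d : nat) (U : Ud d) (p : Hd d) : Hd d :=
  H_act (invmx (val U)) p.

Record Lstructure (d : nat) := {
  Ldom :> Type;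
  u_fun : Ud d -> Ldom -> Ldom;
  pi_fun : Hd d -> Ldom -> Ldom;
  Lrel : Ldom -> Hd d -> Prop  (* Lrel x p  is  [x : p] *)
}.

Definition PQM_model (d : nat) (M : Lstructure d) : Prop :=
  (exists x : M, ~ Lrel x (H_bot d)) /\
  (forall x : M, Lrel x (H_top d)) /\
  (forall p q : Hd d, H_le p q -> forall x : M, Lrel x p -> Lrel x q) /\
  (forall p q : Hd d, compatible p q ->
     forall x : M, Lrel x p -> Lrel x q -> Lrel x (H_meet p q)) /\
  (forall p q : Hd d, forall x : M, Lrel x p -> Lrel (pi_fun q x) (sasaki p q)) /\
  (forall p q : Hd d, H_le p q ->
     forall x : M, Lrel (pi_fun p (pi_fun q x)) (H_bot d) ->
                   Lrel (pi_fun p x) (H_bot d)) /\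
  (forall q : Hd d, forall x : M, Lrel (pi_fun q x) (H_bot d) -> Lrel x (H_perp q)) /\
  (forall (p : Hd d) (U : Ud d) (x : M), Lrel x p -> Lrel (u_fun U x) (u_app U p)) /\
  (forall (p : Hd d) (U : Ud d) (x : M), Lrel (u_fun U x) p -> Lrel x (u_inv_app U p)).

Definition Hilbert_model (d : nat) : Lstructure d :=
  {| Ldom := Hd d;
     u_fun := fun U x => u_app U x;
     pi_fun := fun q x => sasaki x q;
     Lrel := fun x p => H_le x p |}.

Definition strong_morphism (d : nat) (M N : Lstructure d) (f : M -> N) : Prop :=
  forall m : M,
    (forall p : Hd d, Lrel m p <-> Lrel (f m) p) /\
    (forall q : Hd d, f (pi_fun q m) = pi_fun q (f m)) /\
    (forall U : Ud d, f (u_fun U m) = u_fun U (f m)).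

(* Main.v *)
Require Import Defs.
From mathcomp Require Import all_boot all_order all_algebra.
From mathcomp Require Import sesquilinear spectral.

Set Implicit Arguments.
Unset Strict Implicit.
Unset Printing Implicit Defensive.
Import GRing.Theory Num.Theory Num.Def.
Local Open Scope ring_scope.

Section Aux.
Variable d : nat.
Local Notation ort B := (orthomx conjC (hermitian1mx d) B).

Lemma valK (p : Hd d) : <<val p>>%MS = val p.
Proof. exact: (eqP (valP p)). Qed.

Lemma val_span (A : 'M[CC]_d) : val (spanH A) = <<A>>%MS.
Proof. by []. Qed.

Lemma val_perp (p : Hd d) : val (H_perp p) = <<ort (val p)>>%MS.
Proof. by []. Qed.

Lemma val_sasaki (p q : Hd d) : (val (sasaki p q) :=: val q :&: (ort (val q) + val p))%MS.
Proof.
rewrite /sasaki /H_meet val_span; apply: eqmx_trans (genmxE _) _.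
apply: cap_eqmx => //; rewrite /H_join val_span; apply: eqmx_trans (genmxE _) _.
by apply: adds_eqmx => //; rewrite val_perp; exact: genmxE.
Qed.

Lemma Hd_eq (p q : Hd d) : H_le p q -> H_le q p -> p = q.
Proof.
move=> pq qp; apply: val_inj; rewrite -(valK p) -(valK q).
by apply/genmxP; apply/andP; split.
Qed.

Lemma le_bot (p : Hd d) : H_le p (H_bot d) <-> (val p <= (0 : 'M[CC]_d))%MS.
Proof. by rewrite /H_le val_span genmxE. Qed.

Lemma ort_le (A B : 'M[CC]_d) : (A <= B)%MS -> (ort B <= ort A)%MS.
Proof. by rewrite submx_ortho. Qed.

Lemma ort_sym (A B : 'M[CC]_d) : (A <= ort B)%MS -> (B <= ort A)%MS.
Proof.
move=> h; apply: submx_trans (ort_le h); by rewrite ortho_id.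
Qed.

Lemma orthomod (Q K P S : 'M[CC]_d) : (K <= Q)%MS ->
  (P <= Q :&: ort K)%MS -> (Q :&: ort K <= P)%MS ->
  (S <= Q)%MS -> (S <= ort P)%MS -> (S <= K)%MS.
Proof.
move=> KQ P1 P2 SQ SP.
have KP : (K <= ort P)%MS by apply: ort_sym; apply: submx_trans P1 (capmxSr _ _).
have QKP : (Q <= K + P)%MS.
  have h1 : (Q <= (K + ort K) :&: Q)%MS.
    by rewrite sub_capmx submx_refl andbT (addsmx_ortho K) submx1.
  apply: submx_trans h1 _; rewrite -(matrix_modl (ort K) KQ).
  by apply: addsmxS => //; rewrite capmxC.
have h2 : (S <= (K + P) :&: ort P)%MS by rewrite sub_capmx SP (submx_trans SQ QKP).
apply: submx_trans h2 _; rewrite -(matrix_modl P KP) orthomx_ortho_disj.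
by rewrite addsmx0.
Qed.

End Aux.

Theorem mainTheorem11 (d : nat) (hd : (3 <= d)%N)
  (M : Lstructure d) (HM : PQM_model M)
  (kappa : M -> Hd d)
  (Hkappa : forall (m : M) (p : Hd d), Lrel m p <-> H_le (kappa m) p) :
  strong_morphism (N := Hilbert_model d) kappa.
Proof.
case: HM => _ [_ [_ [_ [Hpi [Hpic [Hpib [Hui Hue]]]]]]].
have self : forall m : M, Lrel m (kappa m) by move=> m; apply/Hkappa; exact: submx_refl.
move=> m; split; [|split].
- by move=> p; exact: Hkappa.
- move=> q /=.
  set a := kappa m; set k := kappa (pi_fun q m).
  have k1 : H_le k (sasaki a q) by apply/Hkappa; apply: Hpi; exact: self.
  have kq : (val k <= val q)%MS.
    by apply: submx_trans k1 _; rewrite (val_sasaki a q) capmxSl.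
  pose p := H_meet q (H_perp k).
  have P1 : (val p <= val q :&: orthomx conjC (hermitian1mx d) (val k))%MS.
    by rewrite /p /H_meet val_span genmxE; apply: capmxS => //; rewrite val_perp genmxE.
  have P2 : (val q :&: orthomx conjC (hermitian1mx d) (val k) <= val p)%MS.
    by rewrite /p /H_meet val_span genmxE; apply: capmxS => //; rewrite val_perp genmxE.
  have pq : H_le p q by apply: submx_trans P1 (capmxSl _ _).
  have kp : (val k <= orthomx conjC (hermitian1mx d) (val p))%MS.
    by apply: ort_sym; apply: submx_trans P1 (capmxSr _ _).
  have h3 : Lrel (pi_fun p (pi_fun q m)) (H_bot d).
    apply/Hkappa; apply/le_bot.
    have h4 : H_le (kappa (pi_fun p (pi_fun q m))) (sasaki k p).
      by apply/Hkappa; apply: Hpi; exact: self.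
    apply: submx_trans h4 _; rewrite (val_sasaki k p).
    rewrite -(orthomx_ortho_disj (val p)); apply: capmxS => //.
    by rewrite addsmx_sub submx_refl kp.
  have h5 : H_le a (H_perp p) by apply/Hkappa; apply: Hpib; exact: Hpic pq _ h3.
  rewrite /H_le val_perp genmxE in h5.
  apply: Hd_eq => //.
  apply: (orthomod kq P1 P2); rewrite (val_sasaki a q) ?capmxSl //.
  apply: submx_trans (capmxSr _ _) _; rewrite addsmx_sub h5 andbT.
  exact: ort_le.
- move=> U /=.
  set a := kappa m; set b := kappa (u_fun U m).
  have Uu : val U \in unitmx by apply: unitarymx_unit; exact: valP.
  apply: Hd_eq.
    by apply/Hkappa; apply: Hui; exact: self.
  have h : H_le a (u_inv_app U b) by apply/Hkappa; apply: Hue; exact: self.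
  rewrite /H_le /u_inv_app /H_act val_span genmxE in h.
  rewrite /H_le /u_app /H_act val_span genmxE.
  have := submxMr (val U)^T h.
  by rewrite -mulmxA -trmx_mul mulmxV // trmx1 mulmx1.
Qed.
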